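(* Let $x\in\mathbb{R}\setminus D$. If at least one of $\limsup_n G_n'(x)$, $\liminf_n G_n'(x)$ is infinite, or if both are finite and $$\limsup_n G_n'(x)-\liminf_n G_n'(x)>2,$$ then $\partial^+T(x)=\varnothing$.
   Context: Let $\phi(x)=\operatorname{dist}(x,\mathbb{Z})$ and let $T(x)=\sum_{n=0}^\infty 2^{-n}\phi(2^nx)$ be the Takagi function. For $n\ge1$ let $D_n=\{k/2^{n-1}:k\in\mathbb{Z}\}$, $D=\bigcup_nD_n$, $g_k(x)=\operatorname{dist}(x,D_k)$, $G_n=g_1+\dots+g_n$. For $x\notin D$, $G_n'(x)$ exists and is an integer. The Fréchet superdifferential of an upper semicontinuous $f:\mathbb{R}\to\mathbb{R}$ at $x$ is $\partial^+f(x)=\{\xi\in\mathbb{R}: \limsup_{h\to0}\frac{f(x+h)-f(x)-\xi h}{|h|}\le0\}$. *)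

(* Defs.v *)
From Stdlib Require Import Reals Lra.
Open Scope R_scope.

(* phi(x) = dist(x, Z) *)
Definition phi (x : R) : R := Rmin (frac_part x) (1 - frac_part x).

(* The Takagi series T(x) = sum_{n>=0} 2^{-n} phi(2^n x) : its n-th term. *)
Definition takagi_term (x : R) (n : nat) : R := phi (2 ^ n * x) / 2 ^ n.

Definition in_D (x : R) : Prop :=
  exists (n : nat) (k : Z), (1 <= n)%nat /\ x = IZR k / 2 ^ (n - 1).

(* g_k(x) = dist(x, D_k) = 2^{-(k-1)} dist(2^{k-1} x, Z), since D_k = 2^{-(k-1)} Z *)
Definition g (k : nat) (x : R) : R := phi (2 ^ (k - 1) * x) / 2 ^ (k - 1).

Fixpoint G (n : nat) (x : R) : R :=
  match n with
  | O => 0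
  | S m => G m x + g (S m) x
  end.

Definition limsup_is (u : nat -> R) (L : R) : Prop :=
  forall eps, eps > 0 ->
    (exists N, forall n, (N <= n)%nat -> u n < L + eps) /\
    (forall N, exists n, (N <= n)%nat /\ u n > L - eps).
Definition liminf_is (u : nat -> R) (L : R) : Prop :=
  forall eps, eps > 0 ->
    (exists N, forall n, (N <= n)%nat -> u n > L - eps) /\
    (forall N, exists n, (N <= n)%nat /\ u n < L + eps).
Definition limsup_pinfty (u : nat -> R) : Prop :=
  forall M N, exists n, (N <= n)%nat /\ u n > M.
Definition limsup_minfty (u : nat -> R) : Prop :=
  forall M, exists N, forall n, (N <= n)%nat -> u n < M.
Definition liminf_pinfty (u : nat -> R) : Prop :=
  forall M, exists N, forall n, (N <= n)%nat -> u n > M.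
Definition liminf_minfty (u : nat -> R) : Prop :=
  forall M N, exists n, (N <= n)%nat /\ u n < M.

Definition frechet_superdiff (f : R -> R) (x xi : R) : Prop :=
  forall eps, eps > 0 -> exists delta, delta > 0 /\
    forall h, h <> 0 -> Rabs h < delta ->
      (f (x + h) - f x - xi * h) / Rabs h <= eps.

(* Main.v *)
Require Import Defs.
From Stdlib Require Import Reals Lra Lia ZArith.
Open Scope R_scope.

Lemma floor_unique (k : Z) (r : R) : IZR k <= r < IZR k + 1 -> Int_part r = k.
Proof.
  intros [H1 H2]. unfold Int_part.
  assert (E : (k + 1)%Z = up r).
  { apply tech_up; rewrite plus_IZR; simpl; lra. }
  lia.
Qed.

Lemma floor_bounds (r : R) : IZR (Int_part r) <= r < IZR (Int_part r) + 1.
Proof. destruct (base_Int_part r); lra. Qed.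

Lemma floor_half (a b : R) : Int_part (2*a) = Int_part (2*b) -> Int_part a = Int_part b.
Proof.
  intros E. set (k := Int_part a). set (m := Int_part (2*a)).
  destruct (floor_bounds a) as [A1 A2]. fold k in A1, A2.
  destruct (floor_bounds (2*a)) as [M1 M2]. fold m in M1, M2.
  destruct (floor_bounds (2*b)) as [B1 B2]. rewrite <- E in B1, B2. fold m in B1, B2.
  assert (h1 : (2*k < m+1)%Z).
  { apply lt_IZR. rewrite plus_IZR, mult_IZR. simpl. lra. }
  assert (h2 : (m < 2*k+2)%Z).
  { apply lt_IZR. rewrite plus_IZR, mult_IZR. simpl. lra. }
  assert (h3 : IZR (2*k) <= IZR m) by (apply IZR_le; lia).
  assert (h4 : IZR m + 1 <= IZR (2*k+2)) by (rewrite <- plus_IZR; apply IZR_le; lia).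
  rewrite mult_IZR in h3. rewrite plus_IZR, mult_IZR in h4. simpl in h3, h4.
  symmetry. apply floor_unique. lra.
Qed.

Lemma phi_left (k : Z) (z : R) : IZR k <= z <= IZR k + 1/2 -> phi z = z - IZR k.
Proof.
  intros H. unfold phi, frac_part.
  destruct (Req_dec z (IZR k + 1/2)) as [E|E].
  - rewrite (floor_unique k z) by lra. unfold Rmin; destruct Rle_dec; lra.
  - rewrite (floor_unique k z) by lra. unfold Rmin; destruct Rle_dec; lra.
Qed.

Lemma phi_right (k : Z) (z : R) : IZR k + 1/2 <= z <= IZR k + 1 -> phi z = IZR k + 1 - z.
Proof.
  intros H. destruct (Req_dec z (IZR k + 1)) as [E|E].
  - rewrite (phi_left (k+1) z); rewrite plus_IZR; simpl; lra.
  - unfold phi, frac_part. rewrite (floor_unique k z) by lra.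
    unfold Rmin; destruct Rle_dec; lra.
Qed.

Definition sig (z : R) : R := if Rlt_dec (frac_part z) (1/2) then 1 else -1.

Lemma phi_affine (z w : R) : Int_part (2*z) = Int_part (2*w) -> phi w - phi z = sig z * (w - z).
Proof.
  intros E. pose proof (floor_half _ _ E) as Ek.
  set (k := Int_part z) in *. set (m := Int_part (2*z)) in *.
  destruct (floor_bounds z) as [A1 A2]. fold k in A1, A2.
  destruct (floor_bounds w) as [W1 W2]. rewrite <- Ek in W1, W2. fold k in W1, W2.
  destruct (floor_bounds (2*z)) as [M1 M2]. fold m in M1, M2.
  destruct (floor_bounds (2*w)) as [B1 B2]. rewrite <- E in B1, B2. fold m in B1, B2.
  assert (h1 : (2*k < m+1)%Z).
  { apply lt_IZR. rewrite plus_IZR, mult_IZR. simpl. lra. }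
  assert (h2 : (m < 2*k+2)%Z).
  { apply lt_IZR. rewrite plus_IZR, mult_IZR. simpl. lra. }
  unfold sig, frac_part. fold k.
  destruct (Z.eq_dec m (2*k)) as [Em|Em].
  - assert (Hm : IZR m = 2 * IZR k) by (rewrite Em, mult_IZR; reflexivity).
    rewrite (phi_left k z) by lra. rewrite (phi_left k w) by lra.
    destruct Rlt_dec; lra.
  - assert (Em' : m = (2*k+1)%Z) by lia.
    assert (Hm : IZR m = 2 * IZR k + 1) by (rewrite Em', plus_IZR, mult_IZR; reflexivity).
    rewrite (phi_right k z) by lra. rewrite (phi_right k w) by lra.
    destruct Rlt_dec; lra.
Qed.

Lemma phi_per (z : R) (k : Z) : phi (z + IZR k) = phi z.
Proof.
  unfold phi, frac_part.
  rewrite (floor_unique (Int_part z + k) (z + IZR k)).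
  - rewrite plus_IZR. replace (z + IZR k - (IZR (Int_part z) + IZR k)) with (z - IZR (Int_part z)) by ring. reflexivity.
  - rewrite plus_IZR. destruct (floor_bounds z). lra.
Qed.

Lemma pow2_int (p : nat) : exists k : Z, 2 ^ p = IZR k.
Proof.
  induction p as [|p [k Hk]].
  - exists 1%Z. reflexivity.
  - exists (2*k)%Z. rewrite mult_IZR, <- Hk. simpl. ring.
Qed.

Fixpoint slope (n : nat) (x : R) : R :=
  match n with O => 0 | S m => slope m x + sig (2 ^ m * x) end.

Lemma pow2_pos n : 0 < 2 ^ n.
Proof. apply pow_lt; lra. Qed.

Lemma G_affine (n : nat) (x y : R) :
  Int_part (2 ^ n * x) = Int_part (2 ^ n * y) -> G n y - G n x = slope n x * (y - x).
Proof.
  revert x y. induction n as [|n IH]; intros x y E.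
  - simpl. ring.
  - simpl G. simpl slope.
    replace (2 ^ S n * x) with (2 * (2 ^ n * x)) in E by (simpl; ring).
    replace (2 ^ S n * y) with (2 * (2 ^ n * y)) in E by (simpl; ring).
    pose proof (floor_half _ _ E) as E'.
    pose proof (IH _ _ E') as H1.
    pose proof (phi_affine _ _ E) as H2.
    unfold g. replace (S n - 1)%nat with n by lia.
    pose proof (pow2_pos n).
    assert (H3 : phi (2 ^ n * y) / 2 ^ n - phi (2 ^ n * x) / 2 ^ n = sig (2 ^ n * x) * (y - x)).
    { unfold Rdiv. rewrite <- Rmult_minus_distr_r, H2. field. lra. }
    lra.
Qed.

Lemma G_sum (m : nat) (y : R) : G (S m) y = sum_f_R0 (takagi_term y) m.
Proof.
  induction m as [|m IH].
  - simpl. unfold g, takagi_term. simpl. ring.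
  - change (G (S (S m)) y) with (G (S m) y + g (S (S m)) y).
    rewrite IH. simpl sum_f_R0. unfold g, takagi_term.
    replace (S (S m) - 1)%nat with (S m) by lia. reflexivity.
Qed.

Lemma G_deriv (n : nat) (x : R) : frac_part (2 ^ n * x) <> 0 ->
  derivable_pt_lim (G n) x (slope n x).
Proof.
  intros Hf eps Heps.
  set (z := 2 ^ n * x). set (f := frac_part z).
  assert (Hf0 : 0 <= f < 1) by (unfold f, frac_part; destruct (floor_bounds z); lra).
  pose proof (pow2_pos n).
  assert (Hr : 0 < Rmin f (1 - f) / 2 ^ n).
  { assert (0 < f) by (destruct Hf0 as [[Hp|He] _]; [exact Hp | exfalso; apply Hf; symmetry; exact He]).
    apply Rdiv_lt_0_compat; [|lra]. unfold Rmin; destruct Rle_dec; lra. }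
  exists (mkposreal _ Hr). intros h Hh Hlt. simpl in Hlt.
  assert (E : Int_part (2 ^ n * x) = Int_part (2 ^ n * (x + h))).
  { symmetry. apply floor_unique.
    assert (Ha : Rabs (2 ^ n * h) < Rmin f (1 - f)).
    { rewrite Rabs_mult, (Rabs_right (2^n)) by lra.
      apply (Rmult_lt_compat_l (2^n)) in Hlt; [|lra].
      replace (2 ^ n * (Rmin f (1 - f) / 2 ^ n)) with (Rmin f (1-f)) in Hlt by (field; lra).
      exact Hlt. }
    assert (Hm1 : Rmin f (1 - f) <= f) by apply Rmin_l.
    assert (Hm2 : Rmin f (1 - f) <= 1 - f) by apply Rmin_r.
    apply Rabs_def2 in Ha. unfold f, frac_part in *. fold z.
    replace (2 ^ n * (x + h)) with (z + 2 ^ n * h) by (unfold z; ring). lra. }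
  pose proof (G_affine _ _ _ E) as A.
  replace ((G n (x + h) - G n x) / h - slope n x) with 0.
  - rewrite Rabs_R0. lra.
  - rewrite A. field. exact Hh.
Qed.

Lemma const_limit (u : nat -> R) l C N0 :
  Un_cv u l -> (forall N, (N >= N0)%nat -> u N = C) -> l = C.
Proof.
  intros Hu Hc. destruct (Req_dec l C) as [e|e]; [exact e|exfalso].
  assert (Hp : Rabs (l - C) > 0) by (apply Rabs_pos_lt; lra).
  destruct (Hu _ Hp) as [N HN].
  specialize (HN (max N N0) ltac:(lia)). rewrite Hc in HN by lia.
  unfold Rdist in HN. rewrite Rabs_minus_sym in HN. lra.
Qed.

Lemma sum_tail (f1 f2 : nat -> R) K :
  (forall j, (j > K)%nat -> f1 j = f2 j) ->
  forall N, (N >= K)%nat -> sum_f_R0 f1 N - sum_f_R0 f2 N = sum_f_R0 f1 K - sum_f_R0 f2 K.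
Proof.
  intros H N HN. induction HN as [|N HN IH].
  - reflexivity.
  - simpl. rewrite H by lia. lra.
Qed.

Lemma T_diff (T : R -> R) (HT : forall y, infinite_sum (takagi_term y) (T y)) y x K :
  (forall j, (j > K)%nat -> takagi_term y j = takagi_term x j) ->
  T y - T x = sum_f_R0 (takagi_term y) K - sum_f_R0 (takagi_term x) K.
Proof.
  intros H.
  apply (const_limit (fun N => sum_f_R0 (takagi_term y) N - sum_f_R0 (takagi_term x) N) _ _ K).
  - apply CV_minus; [apply HT | apply HT].
  - intros N HN. apply sum_tail; assumption.
Qed.

Lemma loc_up (s : R) : frac_part s < 1/2 ->
  phi (s + 1/4) - phi s + (phi (2*s + 1/2) - phi (2*s))/2 >= 0.
Proof.
  intros Hs. unfold frac_part in Hs. set (k := Int_part s) in *.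
  destruct (floor_bounds s) as [A1 A2]. fold k in A1, A2.
  assert (E2 : IZR (2*k) = 2 * IZR k) by (rewrite mult_IZR; reflexivity).
  assert (E3 : IZR (2*k+1) = 2 * IZR k + 1) by (rewrite plus_IZR, mult_IZR; reflexivity).
  rewrite (phi_left k s) by lra.
  destruct (Rle_dec s (IZR k + 1/4)).
  - rewrite (phi_left k (s + 1/4)) by lra.
    rewrite (phi_left (2*k) (2*s)) by lra.
    rewrite (phi_right (2*k) (2*s+1/2)) by lra. lra.
  - rewrite (phi_right k (s + 1/4)) by lra.
    rewrite (phi_right (2*k) (2*s)) by lra.
    rewrite (phi_left (2*k+1) (2*s+1/2)) by lra. lra.
Qed.

Lemma loc_down (s : R) : frac_part s >= 1/2 ->
  phi (s - 1/4) - phi s + (phi (2*s - 1/2) - phi (2*s))/2 >= 0.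
Proof.
  intros Hs. unfold frac_part in Hs. set (k := Int_part s) in *.
  destruct (floor_bounds s) as [A1 A2]. fold k in A1, A2.
  assert (E2 : IZR (2*k+1) = 2 * IZR k + 1) by (rewrite plus_IZR, mult_IZR; reflexivity).
  assert (E1 : IZR (2*k) = 2 * IZR k) by (rewrite mult_IZR; reflexivity).
  rewrite (phi_right k s) by lra.
  destruct (Rle_dec s (IZR k + 3/4)).
  - rewrite (phi_left k (s - 1/4)) by lra.
    rewrite (phi_left (2*k+1) (2*s)) by lra.
    rewrite (phi_right (2*k) (2*s-1/2)) by lra. lra.
  - rewrite (phi_right k (s - 1/4)) by lra.
    rewrite (phi_right (2*k+1) (2*s)) by lra.
    rewrite (phi_left (2*k+1) (2*s-1/2)) by lra. lra.
Qed.

Lemma tail_eq (x h : R) (n : nat) (sgn : R) : h = sgn / (4 * 2 ^ n) -> (sgn = 1 \/ sgn = -1) ->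
  forall j, (j > S n)%nat -> takagi_term (x + h) j = takagi_term x j.
Proof.
  intros Hh Hs j Hj. unfold takagi_term.
  replace j with (S (S n) + (j - S (S n)))%nat by lia.
  set (p := (j - S (S n))%nat). destruct (pow2_int p) as [k Hk].
  pose proof (pow2_pos n).
  destruct Hs as [e|e]; subst sgn.
  - replace (2 ^ (S (S n) + p) * (x + h)) with (2 ^ (S (S n) + p) * x + IZR k).
    + rewrite phi_per. reflexivity.
    + rewrite pow_add, Hh, <- Hk. simpl. field. lra.
  - replace (2 ^ (S (S n) + p) * (x + h)) with (2 ^ (S (S n) + p) * x + IZR (-k)).
    + rewrite phi_per. reflexivity.
    + rewrite pow_add, Hh, opp_IZR, <- Hk. simpl. field. lra.
Qed.

Lemma T_step (T : R -> R) (HT : forall y, infinite_sum (takagi_term y) (T y)) (x : R) (m : nat)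
  (sgn : R) (Hs : sgn = 1 \/ sgn = -1) :
  let n := S m in let h := sgn / (4 * 2 ^ n) in let s := 2 ^ n * x in
  Int_part s = Int_part (s + sgn / 4) ->
  T (x + h) - T x = slope n x * h
     + (phi (s + sgn/4) - phi s + (phi (2*s + sgn/2) - phi (2*s))/2) / 2 ^ n.
Proof.
  intros n h s Hint.
  pose proof (pow2_pos n) as Hp.
  rewrite (T_diff T HT (x + h) x (S n)) by (apply (tail_eq x h n sgn); auto).
  unfold n. simpl sum_f_R0. rewrite <- !G_sum. fold n.
  assert (E1 : 2 ^ n * (x + h) = s + sgn / 4).
  { unfold s, h. field. apply Rgt_not_eq, Hp. }
  assert (E2 : 2 ^ S n * (x + h) = 2 * s + sgn / 2) by (unfold s, h; change (2 ^ S n) with (2 * 2 ^ n); field; apply Rgt_not_eq, Hp).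
  assert (E3 : 2 ^ S n * x = 2 * s) by (unfold s; change (2 ^ S n) with (2 * 2 ^ n); ring).
  assert (A : G n (x + h) - G n x = slope n x * (x + h - x)).
  { apply G_affine. fold s. rewrite E1. exact Hint. }
  unfold takagi_term. rewrite E1, E2, E3. fold s.
  replace (x + h - x) with h in A by ring.
  simpl pow. rewrite <- A. field. apply Rgt_not_eq, pow2_pos.
Qed.

Lemma notD_frac (x : R) : ~ in_D x -> forall n, frac_part (2 ^ n * x) <> 0.
Proof.
  intros hx n Hf. apply hx. exists (S n), (Int_part (2 ^ n * x)). split; [lia|].
  replace (S n - 1)%nat with n by lia. unfold frac_part in Hf.
  pose proof (pow2_pos n). replace (IZR (Int_part (2 ^ n * x))) with (2 ^ n * x) by lra. field. lra.
Qed.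

Lemma d_eq (x : R) (hx : ~ in_D x) (d : nat -> R)
  (hd : forall n, (1 <= n)%nat -> derivable_pt_lim (G n) x (d n)) :
  forall n, (1 <= n)%nat -> d n = slope n x.
Proof.
  intros n Hn. apply (uniqueness_limite (G n) x); [apply hd; exact Hn|].
  apply G_deriv. apply notD_frac; exact hx.
Qed.

Lemma INR_lt_pow2 n : INR n < 2 ^ n.
Proof.
  induction n as [|n IH]; [simpl; lra|]. rewrite S_INR. simpl.
  assert (1 <= 2 ^ n) by (apply pow_R1_Rle; lra). lra.
Qed.

Lemma steps (T : R -> R) (HT : forall y, infinite_sum (takagi_term y) (T y))
  (x : R) (hx : ~ in_D x) (d : nat -> R)
  (hd : forall n, (1 <= n)%nat -> derivable_pt_lim (G n) x (d n)) xi :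
  frechet_superdiff T x xi -> forall eps, eps > 0 -> exists N, forall n, (N <= n)%nat ->
  (d (S n) = d n + 1 /\ d n <= xi + eps) \/ (d (S n) = d n - 1 /\ d n >= xi - eps).
Proof.
  intros Hsd eps Heps. destruct (Hsd eps Heps) as [delta [Hdel Hd]].
  destruct (archimed (/ delta)) as [Ha _].
  assert (Hup : (0 <= up (/ delta))%Z).
  { apply le_IZR. assert (0 < / delta) by (apply Rinv_0_lt_compat; lra). simpl; lra. }
  exists (S (Z.to_nat (up (/ delta)))). intros n Hn.
  destruct n as [|m]; [lia|].
  set (n := S m).
  assert (Hn' : (Z.to_nat (up (/ delta)) <= n)%nat) by (unfold n; lia).
  pose proof (pow2_pos n) as Hp.
  assert (Hbig : / delta < 2 ^ n).
  { pose proof (INR_lt_pow2 n).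
    assert (INR (Z.to_nat (up (/ delta))) <= INR n) by (apply le_INR; exact Hn').
    rewrite INR_IZR_INZ, Z2Nat.id in H0 by exact Hup. lra. }
  assert (Hsmall : 1 / (4 * 2 ^ n) < delta).
  { apply (Rmult_lt_reg_r (4 * 2 ^ n)); [lra|].
    replace (1 / (4 * 2 ^ n) * (4 * 2 ^ n)) with 1 by (field; lra).
    apply (Rmult_lt_compat_l delta) in Hbig; [|lra].
    rewrite Rinv_r in Hbig by lra. nra. }
  assert (Hh0 : 0 < 1 / (4 * 2 ^ n)) by (apply Rdiv_lt_0_compat; lra).
  rewrite (d_eq x hx d hd n) by (unfold n; lia).
  rewrite (d_eq x hx d hd (S n)) by lia.
  change (slope (S n) x) with (slope n x + sig (2 ^ n * x)).
  set (s := 2 ^ n * x).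
  destruct (floor_bounds s) as [F1 F2].
  unfold sig. fold s. destruct (Rlt_dec (frac_part s) (1/2)) as [Hf|Hf].
  - left. split; [ring|].
    assert (Hint : Int_part s = Int_part (s + 1/4)).
    { symmetry. apply floor_unique. unfold frac_part in Hf. lra. }
    pose proof (T_step T HT x m 1 (or_introl eq_refl) Hint) as E. fold n s in E.
    pose proof (loc_up s Hf) as L.
    assert (Hq : 0 <= (phi (s + 1 / 4) - phi s + (phi (2 * s + 1 / 2) - phi (2 * s)) / 2) / 2 ^ n).
    { apply Rmult_le_pos; [lra| left; apply Rinv_0_lt_compat; lra]. }
    specialize (Hd (1 / (4 * 2 ^ n))).
    rewrite Rabs_right in Hd by lra.
    assert (Hd' : (T (x + 1 / (4 * 2 ^ n)) - T x - xi * (1 / (4 * 2 ^ n))) / (1 / (4 * 2 ^ n)) <= eps)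
      by (apply Hd; lra).
    apply (Rmult_le_compat_r (1 / (4 * 2 ^ n))) in Hd'; [|lra].
    unfold Rdiv at 1 in Hd'. rewrite Rmult_assoc, Rinv_l, Rmult_1_r in Hd' by lra.
    set (h := 1 / (4 * 2 ^ n)) in *.
    assert (slope n x * h <= xi * h + eps * h) by lra.
    nra.
  - right. split; [ring|].
    assert (Hint : Int_part s = Int_part (s + -1/4)).
    { symmetry. apply floor_unique. unfold frac_part in Hf. lra. }
    pose proof (T_step T HT x m (-1) (or_intror eq_refl) Hint) as E. fold n s in E.
    assert (Hf' : frac_part s >= 1/2) by lra.
    pose proof (loc_down s Hf') as L.
    replace (s - 1/4) with (s + -1/4) in L by field.
    replace (2 * s - 1/2) with (2 * s + -1/2) in L by field.
    assert (Hq : 0 <= (phi (s + -1 / 4) - phi s + (phi (2 * s + -1 / 2) - phi (2 * s)) / 2) / 2 ^ n).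
    { apply Rmult_le_pos; [lra| left; apply Rinv_0_lt_compat; lra]. }
    specialize (Hd (-1 / (4 * 2 ^ n))).
    replace (-1 / (4 * 2 ^ n)) with (- (1 / (4 * 2 ^ n))) in Hd, E by (field; lra).
    rewrite Rabs_Ropp, Rabs_right in Hd by lra.
    assert (Hd' : (T (x + - (1 / (4 * 2 ^ n))) - T x - xi * (- (1 / (4 * 2 ^ n)))) / (1 / (4 * 2 ^ n)) <= eps)
      by (apply Hd; lra).
    apply (Rmult_le_compat_r (1 / (4 * 2 ^ n))) in Hd'; [|lra].
    unfold Rdiv at 1 in Hd'. rewrite Rmult_assoc, Rinv_l, Rmult_1_r in Hd' by lra.
    set (h := 1 / (4 * 2 ^ n)) in *.
    assert (- slope n x * h + xi * h <= eps * h) by lra.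
    nra.
Qed.

Lemma up_inv (d : nat -> R) xi eps N :
  (forall n, (N <= n)%nat ->
    (d (S n) = d n + 1 /\ d n <= xi + eps) \/ (d (S n) = d n - 1 /\ d n >= xi - eps)) ->
  forall m, (N <= m)%nat -> forall k, d (m + k)%nat <= Rmax (d m) (xi + 1 + eps).
Proof.
  intros H m Hm k. induction k as [|k IH].
  - rewrite Nat.add_0_r. apply Rmax_l.
  - replace (m + S k)%nat with (S (m + k)) by lia.
    destruct (H (m + k)%nat ltac:(lia)) as [[E B]|[E B]]; rewrite E;
    unfold Rmax in *; destruct Rle_dec; lra.
Qed.

Lemma low_inv (d : nat -> R) xi eps N :
  (forall n, (N <= n)%nat ->
    (d (S n) = d n + 1 /\ d n <= xi + eps) \/ (d (S n) = d n - 1 /\ d n >= xi - eps)) ->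
  forall m, (N <= m)%nat -> forall k, d (m + k)%nat >= Rmin (d m) (xi - 1 - eps).
Proof.
  intros H m Hm k. induction k as [|k IH].
  - rewrite Nat.add_0_r. apply Rle_ge, Rmin_l.
  - replace (m + S k)%nat with (S (m + k)) by lia.
    destruct (H (m + k)%nat ltac:(lia)) as [[E B]|[E B]]; rewrite E;
    unfold Rmin in *; destruct Rle_dec; lra.
Qed.

Theorem corollary2p2 (T : R -> R)
  (HT : forall y, infinite_sum (takagi_term y) (T y))
  (x : R) (hx : ~ in_D x)
  (d : nat -> R)
  (hd : forall n, (1 <= n)%nat -> derivable_pt_lim (G n) x (d n)) :
  ((limsup_pinfty d \/ limsup_minfty d \/ liminf_pinfty d \/ liminf_minfty d)
   \/ (exists Ls Li, limsup_is d Ls /\ liminf_is d Li /\ Ls - Li > 2)) ->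
  forall xi, ~ frechet_superdiff T x xi.
Proof.
  intros H xi Hsd.
  destruct H as [Hinf | [Ls [Li [Hs [Hi Hgap]]]]].
  - destruct (steps T HT x hx d hd xi Hsd 1 ltac:(lra)) as [N HN].
    pose proof (up_inv d xi 1 N HN N (le_n N)) as U.
    pose proof (low_inv d xi 1 N HN N (le_n N)) as L.
    assert (NU : ~ exists n, (N <= n)%nat /\ d n > Rmax (d N) (xi + 2)).
    { intros [n [Hn Hd]]. specialize (U (n - N)%nat).
      replace (N + (n - N))%nat with n in U by lia.
      replace (xi + 1 + 1) with (xi + 2) in U by ring. lra. }
    assert (NL : ~ exists n, (N <= n)%nat /\ d n < Rmin (d N) (xi - 2)).
    { intros [n [Hn Hd]]. specialize (L (n - N)%nat).
      replace (N + (n - N))%nat with n in L by lia.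
      replace (xi - 1 - 1) with (xi - 2) in L by ring. lra. }
    destruct Hinf as [A | [A | [A | A]]].
    + apply NU. exact (A _ N).
    + apply NL. destruct (A (Rmin (d N) (xi - 2))) as [N1 HN1].
      exists (max N N1). split; [lia|]. apply HN1. lia.
    + apply NU. destruct (A (Rmax (d N) (xi + 2))) as [N1 HN1].
      exists (max N N1). split; [lia|]. apply HN1. lia.
    + apply NL. exact (A _ N).
  - set (e := (Ls - Li - 2) / 4).
    assert (He : e > 0) by (unfold e; lra).
    destruct (steps T HT x hx d hd xi Hsd e He) as [N HN].
    destruct (Hs e He) as [_ Hs2]. destruct (Hi e He) as [_ Hi2].
    destruct (Hs2 N) as [m1 [Hm1 Hd1]].
    destruct (Hi2 m1) as [n1 [Hn1 Hd1']].
    pose proof (low_inv d xi e N HN m1 Hm1 (n1 - m1)%nat) as L.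
    replace (m1 + (n1 - m1))%nat with n1 in L by lia.
    destruct (Hi2 N) as [m2 [Hm2 Hd2]].
    destruct (Hs2 m2) as [n2 [Hn2 Hd2']].
    pose proof (up_inv d xi e N HN m2 Hm2 (n2 - m2)%nat) as U.
    replace (m2 + (n2 - m2))%nat with n2 in U by lia.
    unfold Rmin, Rmax in *. repeat match goal with H: context[Rle_dec ?a ?b] |- _ => destruct (Rle_dec a b) end; unfold e in *; lra.
Qed.
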